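(* Consider the longitudinal random intercept setting described in the context, with $N\ge 2$ individuals, $T\ge 2$ time points, $\rho\in[0,1)$, nominal coverage $1-\alpha$, Hausman pretest significance level $\widetilde{\alpha}$, and estimators $\widehat{\sigma}_{\varepsilon}>0$, $\widehat{\sigma}_{\mu}\ge 0$ of $\sigma_{\varepsilon},\sigma_{\mu}$. Then the scaled expected length of the two-stage interval $K(\widehat{\sigma}_{\varepsilon}, \widehat{\sigma}_{\mu})$, i.e. the expected length of $K(\widehat{\sigma}_{\varepsilon}, \widehat{\sigma}_{\mu})$ divided by the expected length of $J_{\text{adj}}(\widehat{\sigma}_{\varepsilon})$, is equal to $$ \frac{ z_{1-\alpha/2}}{\Phi^{-1}((c^*+1)/2)} \cdot \frac{ E \left( (\widehat{\sigma}_{\varepsilon}/\sigma_{\varepsilon}) \left( \sum_{i=1}^N \sum_{t=1}^T (u_{it} - \overline{u}_i)^2 \right)^{-1/2} \left( \widehat{w}^{1/2}\, \mathcal{I}(\mathcal{B}) + \mathcal{I}(\mathcal{B}^c) \right) \right)}{E \left( (\widehat{\sigma}_{\varepsilon}/\sigma_{\varepsilon}) \left( \sum_{i=1}^N \sum_{t=1}^T (u_{it} - \overline{u}_i)^2 \right)^{-1/2} \right)}, $$ where $\overline{u}_i = T^{-1}\sum_{t=1}^T u_{it}$.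
   Context: Model: for $i=1,\dots,N$ and $t=1,\dots,T$, $y_{it} = a + \beta x_{it} + \mu_i + \varepsilon_{it}$, where the $\varepsilon_{it}$ are i.i.d. $N(0,\sigma_\varepsilon^2)$, independent of the vectors $(\mu_i, x_{i1},\dots,x_{iT})$, $i=1,\dots,N$, which are i.i.d. multivariate normal with mean zero and covariance matrix $\begin{bmatrix}\sigma_\mu^2 & \widetilde{\tau}\sigma_\mu\sigma_x e^{\prime}\\ \widetilde{\tau}\sigma_\mu\sigma_x e & \sigma_x^2 G\end{bmatrix}$, with $e$ the $T$-vector of ones and $G$ the $T\times T$ matrix with 1's on the diagonal and $\rho$ off the diagonal. Here $\sigma_\varepsilon,\sigma_\mu,\sigma_x>0$. The non-exogeneity parameter is $\tau = \widetilde{\tau}\,(T/(1+(T-1)\rho))^{1/2}\in(-1,1)$ (it equals $\mathrm{Corr}(\mu_i,\overline{x}_i)$), and $\psi=\sigma_\mu/\sigma_\varepsilon$. The covariates are represented as $x_{it}/\sigma_x = (1-\rho)^{1/2}u_{it} + \rho^{1/2}v_i$, where $u_{11},\dots,u_{NT},v_1,\dots,v_N$ are i.i.d. $N(0,1)$ and independent of the $\varepsilon_{it}$; $x$ denotes the vector of all $x_{it}$. Notation: $\overline{y}_i = T^{-1}\sum_t y_{it}$, $\overline{x}_i=T^{-1}\sum_t x_{it}$, $\overline{x}=(NT)^{-1}\sum_{i,t}x_{it}$, $\overline{y}=(NT)^{-1}\sum_{i,t}y_{it}$, $\mathrm{SSB}=\sum_i(\overline{x}_i-\overline{x})^2$,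 $\mathrm{SSW}=\sum_{i,t}(x_{it}-\overline{x}_i)^2$, $r(x)=\mathrm{SSB}/\mathrm{SSW}$, $q(\psi,T)=\psi^2+1/T$, $z_c=\Phi^{-1}(c)$ with $\Phi$ the $N(0,1)$ cdf, and $\mathcal{I}(\mathcal{A})$ is 1 if statement $\mathcal{A}$ is true and 0 otherwise. Estimators: the within (fixed effects) estimator $\widetilde{\beta}_W = \sum_{i,t}(x_{it}-\overline{x}_i)(y_{it}-\overline{y}_i)/\mathrm{SSW}$, with $\mathrm{Var}(\widetilde{\beta}_W\mid x)=\sigma_\varepsilon^2/\mathrm{SSW}$; the between estimator $\widetilde{\beta}_B=\sum_i(\overline{x}_i-\overline{x})(\overline{y}_i-\overline{y})/\mathrm{SSB}$ (OLS slope of $\overline{y}_i$ on $\overline{x}_i$ with intercept), with $\mathrm{Var}_0(\widetilde{\beta}_B\mid x)=(\sigma_\mu^2+\sigma_\varepsilon^2/T)/\mathrm{SSB}$ (its conditional variance when $\tau=0$); the GLS estimator for the random intercept model with $\tau=0$, $\widehat{\beta}(\psi)=\big(\mathrm{SSW}\,\widetilde{\beta}_W + (\mathrm{SSB}/q(\psi,T))\widetilde{\beta}_B\big)/\big(\mathrm{SSW}+\mathrm{SSB}/q(\psi,T)\big)$, with $\mathrm{Var}_0(\widehat{\beta}(\psi)\mid x)=\sigma_\varepsilon^2/(\mathrm{SSW}+\mathrm{SSB}/q(\psi,T))$. Two-stage interval: the Hausman statistic is $H(\sigma_\varepsilon,\sigma_\mu)=(\widetilde{\beta}_W-\widetilde{\beta}_B)^2/\big(\mathrm{Var}(\widetilde{\beta}_W\mid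 x)+\mathrm{Var}_0(\widetilde{\beta}_B\mid x)\big)$. If $H(\sigma_\varepsilon,\sigma_\mu)\le z^2_{1-\widetilde{\alpha}/2}$, $K(\sigma_\varepsilon,\sigma_\mu)$ is $I(\psi)=[\widehat{\beta}(\psi)\pm z_{1-\alpha/2}(\mathrm{Var}_0(\widehat{\beta}(\psi)\mid x))^{1/2}]$; otherwise it is $J(\sigma_\varepsilon)=[\widetilde{\beta}_W\pm z_{1-\alpha/2}\sigma_\varepsilon/\mathrm{SSW}^{1/2}]$. $K(\widehat{\sigma}_\varepsilon,\widehat{\sigma}_\mu)$ is obtained by replacing $\sigma_\varepsilon,\sigma_\mu$ everywhere (including $\psi$ by $\widehat{\psi}=\widehat{\sigma}_\mu/\widehat{\sigma}_\varepsilon$) by the estimators. $\mathcal{B}$ is the statement $H(\widehat{\sigma}_\varepsilon,\widehat{\sigma}_\mu)\le z^2_{1-\widetilde{\alpha}/2}$, and $\widehat{w}=q(\widehat{\psi},T)/(q(\widehat{\psi},T)+r(x))$. Adjusted interval: fix $\widetilde{\rho}\in(0,1)$; $c_{\min}$ is the coverage probability $P(\beta\in K(\widehat{\sigma}_\varepsilon,\widehat{\sigma}_\mu))$ minimized over $\tau\in(-1,1)$, $\psi\in(0,\infty)$ and $\rho\in[0,\widetilde{\rho}]$. For $c\in(0,1)$, $J_c(\widehat{\sigma}_\varepsilon)=[\widetilde{\beta}_W\pm\Phi^{-1}((c+1)/2)\,\widehat{\sigma}_\varepsilon/\mathrm{SSW}^{1/2}]$; $c^*$ is the value of $c$ with $P(\beta\in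 J_c(\widehat{\sigma}_\varepsilon))=c_{\min}$, and $J_{\text{adj}}(\widehat{\sigma}_\varepsilon)=J_{c^*}(\widehat{\sigma}_\varepsilon)$. *)

(* Defs.v *)
From HB Require Import structures.
From mathcomp Require Import all_boot all_order all_algebra.
From mathcomp Require Import all_classical all_reals all_analysis.
Set Implicit Arguments. Unset Strict Implicit. Unset Printing Implicit Defensive.
Import Order.TTheory GRing.Theory Num.Theory Num.Def.
Local Open Scope classical_set_scope.
Local Open Scope ring_scope.

Section Normal.
Context {R : realType}.

Definition Phi (x : R) : R := fine (normal_prob 0 1 `]-oo, x]).

(* Phi^{-1}(c) as the (generalized) quantile inf {x | c <= Phi x};
   for c in (0,1) this is the usual inverse of Phi. *)
Definition zq (c : R) : R := inf [set x | c <= Phi x].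

Definition std_normal_rv d (Om : measurableType d) (P : probability Om R)
  (X : Om -> R) : Prop :=
  forall A : set R, measurable A -> P (X @^-1` A) = normal_prob 0 1 A.

Definition mutually_independent d (Om : measurableType d)
  (P : probability Om R) (I : finType) (X : I -> Om -> R) : Prop :=
  forall B : I -> set R, (forall i, measurable (B i)) ->
    P (\bigcap_(i in [set: I]) (X i @^-1` B i)) =
    (\prod_(i : I) P (X i @^-1` B i))%E.
End Normal.

Section Stats.
Context {R : realType} (N T : nat).
Notation arr := ('I_N -> 'I_T -> R).

Definition rowmean (z : arr) (i : 'I_N) : R := (T%:R)^-1 * \sum_(t < T) z i t.
Definition grandmean (z : arr) : R :=
  ((N * T)%:R)^-1 * \sum_(i < N) \sum_(t < T) z i t.
Definition SSB (x : arr) : R := \sum_(i < N) (rowmean x i - grandmean x) ^+ 2.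
Definition SSW (x : arr) : R :=
  \sum_(i < N) \sum_(t < T) (x i t - rowmean x i) ^+ 2.
Definition rx (x : arr) : R := SSB x / SSW x.
Definition qf (psi : R) : R := psi ^+ 2 + (T%:R)^-1.

Definition betaW (y x : arr) : R :=
  (\sum_(i < N) \sum_(t < T) (x i t - rowmean x i) * (y i t - rowmean y i))
  / SSW x.
Definition betaB (y x : arr) : R :=
  (\sum_(i < N) (rowmean x i - grandmean x) * (rowmean y i - grandmean y))
  / SSB x.
Definition betaGLS (psi : R) (y x : arr) : R :=
  (SSW x * betaW y x + (SSB x / qf psi) * betaB y x)
  / (SSW x + SSB x / qf psi).
Definition Hausman (se sm : R) (y x : arr) : R :=
  (betaW y x - betaB y x) ^+ 2
  / (se ^+ 2 / SSW x + (sm ^+ 2 + se ^+ 2 / T%:R) / SSB x).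

(* intervals are represented as (centre, half-width) = [centre +- half-width] *)
Definition covers (b : R) (I : R * R) : bool := `|b - I.1| <= I.2.
Definition ilength (I : R * R) : R := 2 * I.2.

Definition pretestB (alphat se sm : R) (y x : arr) : bool :=
  Hausman se sm y x <= zq (1 - alphat / 2) ^+ 2.

Definition Kint (alpha alphat se sm : R) (y x : arr) : R * R :=
  if pretestB alphat se sm y x then
    (betaGLS (sm / se) y x,
     zq (1 - alpha / 2) * Num.sqrt (se ^+ 2 / (SSW x + SSB x / qf (sm / se))))
  else (betaW y x, zq (1 - alpha / 2) * (se / Num.sqrt (SSW x))).

Definition Jc (c se : R) (y x : arr) : R * R :=
  (betaW y x, zq ((c + 1) / 2) * (se / Num.sqrt (SSW x))).

Definition what (se sm : R) (x : arr) : R :=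
  qf (sm / se) / (qf (sm / se) + rx x).

Definition xdata (sx rho : R) (u : arr) (v : 'I_N -> R) : arr :=
  fun i t => sx * (Num.sqrt (1 - rho) * u i t + Num.sqrt rho * v i).
(* mu_i = sm (tau * (xbar_i/sx)/sd(xbar_i/sx) + (1-tau^2)^{1/2} w_i), with
   w_i i.i.d. N(0,1) independent of everything else: this gives
   (mu_i, x_i) jointly normal with Var mu_i = sm^2 and
   Cov(mu_i, x_it) = tau~ sm sx, tau = Corr(mu_i, xbar_i). *)
Definition mudata (sm tau rho : R) (u : arr) (v w : 'I_N -> R) (i : 'I_N) : R :=
  sm * (tau * Num.sqrt (T%:R / (1 + (T%:R - 1) * rho))
          * (Num.sqrt (1 - rho) * rowmean u i + Num.sqrt rho * v i)
        + Num.sqrt (1 - tau ^+ 2) * w i).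
Definition ydata (a beta se sm sx tau rho : R) (u : arr) (v w : 'I_N -> R)
  (e : arr) : arr :=
  fun i t => a + beta * xdata sx rho u v i t + mudata sm tau rho u v w i
             + se * e i t.
End Stats.

(* index set of the underlying i.i.d. N(0,1) variables:
   u_it, eps_it/sigma_eps, v_i, w_i *)
Definition src (N T : nat) : finType :=
  (('I_N * 'I_T) + ('I_N * 'I_T) + 'I_N + 'I_N)%type.

Section Model.
Context {R : realType} (N T : nat) d (Om : measurableType d)
  (Z : src N T -> Om -> R).
Definition uZ (om : Om) : 'I_N -> 'I_T -> R :=
  fun i t => Z (inl (inl (inl (i, t)))) om.
Definition eZ (om : Om) : 'I_N -> 'I_T -> R :=
  fun i t => Z (inl (inl (inr (i, t)))) om.
Definition vZ (om : Om) : 'I_N -> R := fun i => Z (inl (inr i)) om.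
Definition wZ (om : Om) : 'I_N -> R := fun i => Z (inr i) om.

Definition Xobs (sx rho : R) (om : Om) : 'I_N -> 'I_T -> R :=
  xdata sx rho (uZ om) (vZ om).
Definition Yobs (a beta se sm sx tau rho : R) (om : Om) : 'I_N -> 'I_T -> R :=
  ydata a beta se sm sx tau rho (uZ om) (vZ om) (wZ om) (eZ om).
End Model.

(* Main.v *)
Require Import Defs.
From HB Require Import structures.
From mathcomp Require Import all_boot all_order all_algebra.
From mathcomp Require Import all_classical all_reals all_analysis.
Import Order.TTheory GRing.Theory Num.Theory Num.Def.
Local Open Scope classical_set_scope.
Local Open Scope ring_scope.
From mathcomp Require Import ring lra.


Section Meas.
Context {R : realType} d (Om : measurableType d).
Notation mf f := (measurable_fun [set: Om] (f : Om -> R)).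

Lemma inv_mfun : measurable_fun [set: R] (@GRing.inv R).
Proof.
rewrite (_ : GRing.inv = fun x : R => if x == 0 then 0 else x^-1); last first.
  by apply/funext => x; case: eqP => // ->; rewrite invr0.
apply: measurable_fun_if => //.
- apply: (measurable_fun_bool true).
  rewrite setTI (_ : _ @^-1` _ = [set 0]); first exact: measurable_set1.
  by apply/seteqP; split => x /=; [move/eqP|move=> ->; rewrite eqxx].
- apply: (measurable_funS (E := ~` [set (0:R)])).
  + apply: measurableC; exact: measurable_set1.
  + by move=> x [_ /=] /negbT /eqP.
  + apply: measurable_realfun.open_continuous_measurable_fun.
    * rewrite openC; apply: accessible_closed_set1; apply: hausdorff_accessible; exact: Rhausdorff.  
    * move=> x; rewrite inE => /eqP x0; exact: inv_continuous.
Qed.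

Lemma mcst (c : R) : mf (fun _ => c).
Proof. exact: measurable_cst. Qed.
Lemma mD (f g : Om -> R) : mf f -> mf g -> mf (fun x => f x + g x).
Proof. exact: measurable_realfun.measurable_funD. Qed.
Lemma mM (f g : Om -> R) : mf f -> mf g -> mf (fun x => f x * g x).
Proof. exact: measurable_realfun.measurable_funM. Qed.
Lemma mN (f : Om -> R) : mf f -> mf (fun x => - f x).
Proof.
move=> h; have := @mM (fun=> -1) f (mcst (-1)) h.
by rewrite (_ : (fun x => -1 * f x) = (fun x => - f x)) //; apply/funext => x; rewrite mulN1r.
Qed.
Lemma mV (f : Om -> R) : mf f -> mf (fun x => (f x)^-1).
Proof. move=> h; exact: (measurableT_comp inv_mfun h). Qed.
Lemma mX (f : Om -> R) n : mf f -> mf (fun x => f x ^+ n).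
Proof. exact: measurable_realfun.measurable_funX. Qed.
Lemma mS (f : Om -> R) : mf f -> mf (fun x => Num.sqrt (f x)).
Proof. move=> h; exact: (measurableT_comp (measurable_realfun.continuous_measurable_fun (@sqrt_continuous R)) h). Qed.
Lemma msum n (F : Om -> 'I_n -> R) : (forall i, mf (fun x => F x i)) ->
  mf (fun x => \sum_(i < n) F x i).
Proof. move=> h; exact: (@measurable_sum _ _ _ _ _ (index_enum 'I_n) (fun i x => F x i)). Qed.
Lemma mif (b : Om -> bool) (f g : Om -> R) :
  measurable_fun [set: Om] b -> mf f -> mf g -> mf (fun x => if b x then f x else g x).
Proof. exact: measurable_fun_ifT. Qed.
Lemma mbool (b : Om -> bool) : measurable_fun [set: Om] b -> mf (fun x => (b x)%:R).
Proof.
move=> h; rewrite (_ : (fun x => _) = fun x => if b x then 1 else 0).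
  exact: mif h (mcst _) (mcst _).
by apply/funext => x; case: (b x).
Qed.
Lemma mle (f g : Om -> R) : mf f -> mf g -> measurable_fun [set: Om] (fun x => f x <= g x).
Proof. exact: measurable_realfun.measurable_fun_ler. Qed.
End Meas.


Section Null.
Context {R : realType} d (Om : measurableType d) (P : probability Om R).

Lemma indep2 (I : finType) (Z : I -> Om -> R) a b (A B : set R) :
  a != b -> mutually_independent P Z -> measurable A -> measurable B ->
  P (Z a @^-1` A `&` Z b @^-1` B) = (P (Z a @^-1` A) * P (Z b @^-1` B))%E.
Proof.
move=> ab hI mA mB.
pose Bs i := if i == a then A else if i == b then B else setT.
have := hI Bs.
have mBs : forall i, measurable (Bs i).
  by move=> i; rewrite /Bs; case: ifP => _ //; case: ifP.
move=> /(_ mBs).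
have -> : \bigcap_(i in [set: I]) (Z i @^-1` Bs i) = Z a @^-1` A `&` Z b @^-1` B.
  apply/seteqP; split => x.
  - move=> h; split; [have := h a Logic.I|have := h b Logic.I]; rewrite /Bs ?eqxx //.
    by rewrite eq_sym (negbTE ab).
  - move=> [ha hb] i _; rewrite /Bs; case: eqP => [->//|_]; case: eqP => [->//|_].
    done.
move=> ->.
rewrite (bigD1 a) //= (bigD1 b) /=; last by rewrite eq_sym.
rewrite big1 ?mule1.
  by rewrite /Bs eqxx eq_sym (negbTE ab) eqxx.
move=> i /andP[ib ia]; rewrite /Bs (negbTE ia) (negbTE ib) preimage_setT.
exact: probability_setT.
Qed.

Lemma np_itv_le (x w : R) : 0 <= w ->
  (normal_prob 0 1 `[x, (x + w)%R[%classic <= (normal_peak 1 * w)%:E)%E.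
Proof.
move=> w0.
apply: (@le_trans _ _ (\int[lebesgue_measure]_(y in `[x, (x + w)%R[%classic) (normal_peak (1:R))%:E))%E.
  apply: ge0_le_integral => //=.
  - by move=> y _; rewrite lee_fin normal_pdf_ge0.
  - apply/measurable_realfun.measurable_EFinP.
    exact: (measurable_funS _ _ (measurable_normal_pdf 0 1)).
  - by move=> y _; rewrite lee_fin; apply: normal_pdf_ub; rewrite oner_eq0.
rewrite integral_cst //= lebesgue_measure_itv /=.
case: ifP => _; last by rewrite mule0 lee_fin mulr_ge0 ?normal_peak_ge0.
by rewrite -EFinB -EFinM lee_fin addrAC subrr add0r.
Qed.


Definition lo (m k : nat) : R := - m%:R + k%:R / (m ^ 2)%:R.

Lemma cover (m : nat) (x : R) : (0 < m)%N -> `|x| < m%:R ->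
  exists2 k, (k < 2 * m ^ 3)%N &
    `[lo m k, (lo m k + ((m ^ 2)%:R)^-1)%R[%classic x.
Proof.
move=> m0 hx.
have m2 : 0 < ((m ^ 2)%:R : R) by rewrite ltr0n expn_gt0 m0.
set y := (x + m%:R) * (m ^ 2)%:R.
have y0 : 0 <= y.
  rewrite /y mulr_ge0 ?ltW //.
  by move: hx; rewrite ltr_norml => /andP[h _]; lra.
exists (trunc y).
  rewrite truncn_lt_nat // /y natrM !natrX.
  have mp : 0 < (m%:R : R) by rewrite ltr0n.
  rewrite (_ : 2%:R * m%:R ^+ 3 = (m%:R + m%:R) * m%:R ^+ 2); last by ring.
  rewrite ltr_pM2r; last by rewrite exprn_gt0.
  move: hx; rewrite ltr_norml => /andP[_ h]; lra.
rewrite /= in_itv /= /lo.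
have k1 : (trunc y)%:R <= y by rewrite -truncn_ge_nat.
have k2 : y < (trunc y).+1%:R by rewrite -truncn_le_nat.
apply/andP; split.
  have : (trunc y)%:R / (m ^ 2)%:R <= x + m%:R by rewrite ler_pdivrMr.
  lra.
have : x + m%:R < (trunc y).+1%:R / (m ^ 2)%:R by rewrite ltr_pdivlMr.
rewrite -natr1 mulrDl mul1r; lra.
Qed.


Lemma mpre (f : Om -> R) (A : set R) : measurable_fun setT f -> measurable A ->
  measurable (f @^-1` A).
Proof. by move=> hf mA; have := hf measurableT A mA; rewrite setTI. Qed.

Lemma tail_meas (m : R) : measurable [set x : R | m <= `|x|].
Proof.
rewrite (_ : [set x : R | m <= `|x|] = `]-oo, - m]%classic `|` `[m, +oo[%classic).
  by apply: measurableU; exact: measurable_itv.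
apply/seteqP; split => x /=; rewrite ler_normr !in_itv /= ?andbT.
  by case/orP => h; [right|left; rewrite lerNr].
by case=> h; apply/orP; [right; rewrite -lerNr|left].
Qed.


Definition tailset (m : nat) : set R := [set x : R | m%:R <= `|x|].

Lemma bound (I : finType) (Z : I -> Om -> R) a b (m : nat) :
  a != b -> (forall k, measurable_fun setT (Z k)) ->
  (forall k, std_normal_rv P (Z k)) -> mutually_independent P Z -> (0 < m)%N ->
  (P [set om | Z a om = Z b om] <=
   normal_prob 0 1 (tailset m) +
   ((2 * m ^ 3)%:R * (normal_peak 1 * ((m ^ 2)%:R)^-1) ^+ 2)%:E)%E.
Proof.
move=> ab hZ hN hI m0.
set w : R := ((m ^ 2)%:R)^-1.
have w0 : 0 <= w by rewrite invr_ge0 ler0n.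
set Ik := fun k : nat => `[lo m k, (lo m k + w)%R[%classic.
set Ak := fun k : nat => Z a @^-1` Ik k `&` Z b @^-1` Ik k.
set K := (2 * m ^ 3)%N.
set U := \big[setU/set0]_(k < K) Ak k.
have mAk : forall k, measurable (Ak k).
  by move=> k; apply: measurableI; apply: mpre => //; exact: measurable_itv.
have mU : measurable U by apply: bigsetU_measurable => k _.
have mT : measurable (Z a @^-1` (tailset m)).
  by apply: mpre => //; exact: tail_meas.
have mE : measurable [set om | Z a om = Z b om].
  rewrite (_ : [set om | _] = (fun om => Z a om - Z b om) @^-1` [set 0]).
    apply: mpre; last exact: measurable_set1.
    exact: measurable_realfun.measurable_funB.
  by apply/seteqP; split => om /=; [move=> ->; rewrite subrr|move/eqP; rewrite subr_eq0 => /eqP].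
have sub : [set om | Z a om = Z b om] `<=` Z a @^-1` (tailset m) `|` U.
  move=> om /= h.
  case: (lerP m%:R `|Z a om|) => hx; first by left.
  right; have [k kK hk] := @cover m _ m0 hx.
  rewrite /U -bigcup_mkord; exists k => //; rewrite /Ak /=; split => //.
  by rewrite -h.
apply: (le_trans (le_measure _ _ _ sub)); rewrite ?inE //; first exact: measurableU.
apply: (le_trans (measureU2 _ _ _)) => //.
have h1 := hN a (tailset m) (tail_meas m%:R).
apply: leeD; first by move: h1 => /= ->.
apply: (@le_trans _ _ (\sum_(k < K) P (Ak k))%E).
  by apply: (@content_subadditive _ _ _ P U Ak K).
apply: (@le_trans _ _ (\sum_(k < K) (((normal_peak 1 * w) ^+ 2)%R)%:E)%E).
  apply: lee_sum => k _.
  rewrite /Ak indep2 //; try exact: measurable_itv.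
  rewrite !hN; try exact: measurable_itv.
  rewrite expr2 EFinM; apply: lee_pmul => //; try exact: np_itv_le.
by rewrite sumEFin sumr_const card_ord mulr_natl.
Qed.


Lemma null_eq (I : finType) (Z : I -> Om -> R) a b :
  a != b -> (forall k, measurable_fun setT (Z k)) ->
  (forall k, std_normal_rv P (Z k)) -> mutually_independent P Z ->
  P [set om | Z a om = Z b om] = 0%E.
Proof.
move=> ab hZ hN hI.
set c := normal_peak (1:R).
have c0 : 0 < c by apply: normal_peak_gt0; rewrite oner_eq0.
set F := fun n : nat => tailset n.+1.
have mF : forall n, measurable (F n) by move=> n; exact: tail_meas.
have cv : (normal_prob (0:R) 1 \o F) @ \oo --> normal_prob (0:R) 1 (\bigcap_n F n).
  apply: nonincreasing_cvg_mu => //.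
  - apply: (le_lt_trans (probability_le1 (normal_prob (0:R) 1) (mF 0%N))); exact: ltry.
  - exact: bigcapT_measurable.
  - move=> n k nk; apply/subsetPset => x; rewrite /F /tailset /=; apply: le_trans.
    by rewrite ler_nat.
have e0 : \bigcap_n F n = set0.
  apply/seteqP; split => x // h.
  have := h (trunc `|x|) Logic.I; rewrite /F /tailset /=.
  move=> h2; have : `|x| < (trunc `|x|).+1%:R by rewrite -truncn_le_nat.
  lra.
rewrite e0 measure0 in cv.
have [fF cvr] := (fine_cvgP _ _).1 cv.
apply/eqP; rewrite eq_le measure_ge0 andbT.
apply/lee_addgt0Pr => e ep; rewrite add0e.
have e2 : 0 < e / 2 by rewrite divr_gt0.
have H1 : \forall t \near \oo, `|0 - fine (normal_prob (0:R) 1 (F t))| < e / 2.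
  by move/cvgrPdist_lt : cvr; apply.
have H2 := nbhs_infty_ge (trunc (4 * c ^+ 2 / e)).
have [n [hn1 hn2]] := filter_ex (filterS2 _ (fun n A B => conj A B) H1 H2).
have hb := @bound I Z a b n.+1 ab hZ hN hI (ltn0Sn n).
apply: (le_trans hb).
rewrite (_ : (2 * n.+1 ^ 3)%:R * (c * ((n.+1 ^ 2)%:R)^-1) ^+ 2 = 2 * c ^+ 2 / n.+1%:R); last first.
  rewrite natrM !natrX; field; by rewrite addrC natr1 pnatr_eq0.
have fin : normal_prob (0:R) 1 (F n) \is a fin_num.
  rewrite ge0_fin_numE ?measure_ge0 //.
  apply: (le_lt_trans (probability_le1 (normal_prob (0:R) 1) (mF n))); exact: ltry.
rewrite -(fineK fin) -EFinD lee_fin.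
move: hn1; rewrite /= sub0r normrN => hn1.
have : (2 * c ^+ 2 / n.+1%:R) < e / 2.
  have : 4 * c ^+ 2 / e < n.+1%:R.
    by rewrite -truncn_le_nat.
  rewrite ltr_pdivrMr // => h.
  rewrite ltr_pdivrMr ?ltr0Sn //. nra.
have := ler_norm (fine (normal_prob 0 1 (F n))).
move=> h3 h4; rewrite [leRHS]splitr; apply: ltW; apply: ltrD => //.
exact: le_lt_trans h3 hn1.
Qed.


Lemma meas_eq (f g : Om -> R) : measurable_fun setT f -> measurable_fun setT g ->
  measurable [set om | f om = g om].
Proof.
move=> hf hg.
rewrite (_ : [set om | _] = (fun om => f om - g om) @^-1` [set 0]).
  apply: mpre; last exact: measurable_set1.
  exact: measurable_realfun.measurable_funB.
by apply/seteqP; split => om /=; [move=> ->; rewrite subrr|move/eqP; rewrite subr_eq0 => /eqP].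
Qed.

End Null.


Section Alg.
Context {R : realType} (N T : nat).
Notation arr := ('I_N -> 'I_T -> R).

Lemma rowmean_x (sx rho : R) (u : arr) v i : (0 < T)%N ->
  rowmean (xdata sx rho u v) i =
  sx * (Num.sqrt (1 - rho) * rowmean u i + Num.sqrt rho * v i).
Proof.
move=> T0; rewrite /rowmean /xdata.
rewrite -mulr_sumr big_split /= -mulr_sumr sumr_const card_ord.
have Tn : (T%:R : R) != 0 by rewrite pnatr_eq0 -lt0n.
by rewrite -mulr_natr; field.
Qed.

Lemma SSW_x (sx rho : R) (u : arr) v : (0 < T)%N -> rho <= 1 ->
  SSW (xdata sx rho u v) = sx ^+ 2 * (1 - rho) *
    \sum_(i < N) \sum_(t < T) (u i t - rowmean u i) ^+ 2.
Proof.
move=> T0 r1; rewrite /SSW mulr_sumr; apply: eq_bigr => i _.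
rewrite mulr_sumr; apply: eq_bigr => t _.
rewrite rowmean_x // /xdata.
rewrite -[in RHS](@sqr_sqrtr _ (1 - rho)) ?subr_ge0 //.
ring.
Qed.

Lemma SSB_ge0 (x : arr) : 0 <= SSB x.
Proof. by rewrite /SSB sumr_ge0 // => i _; exact: sqr_ge0. Qed.

Lemma SSW_ge0 (x : arr) : 0 <= SSW x.
Proof. by rewrite /SSW sumr_ge0 // => i _; rewrite sumr_ge0 // => t _; exact: sqr_ge0. Qed.

Lemma K_len (alpha alphat se sm : R) (y x : arr) : (0 < T)%N ->
  0 < se -> 0 < SSW x ->
  ilength (Kint alpha alphat se sm y x) =
  2 * zq (1 - alpha / 2) * (se / Num.sqrt (SSW x)) *
   (Num.sqrt (what se sm x) * (pretestB alphat se sm y x)%:R +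
    (~~ pretestB alphat se sm y x)%:R).
Proof.
move=> T0 se0 S0.
rewrite /ilength /Kint; case: (pretestB _ _ _ _ _) => /=; last by rewrite mulr0 add0r !mulr1 mulrA.
rewrite mulr1 addr0.
have q0 : 0 < qf T (sm / se).
  by rewrite /qf ltr_wpDl ?sqr_ge0 // invr_gt0 ltr0n.
have B0 := SSB_ge0 x.
set S := SSW x; set Bb := SSB x; set q := qf T (sm / se).
rewrite /what /rx -/S -/Bb -/q.
have -> : se ^+ 2 / (S + Bb / q) = (se ^+ 2 / S) * (q / (q + Bb / S)).
  field; rewrite !gt_eqF // ltr_wpDr //; exact: mulr_gt0.
rewrite sqrtrM; last by rewrite divr_ge0 ?sqr_ge0 // ltW.
rewrite sqrtrM ?sqr_ge0 // sqrtr_sqr ger0_norm ?ltW // sqrtrV ?ltW //.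
by rewrite !mulrA.
Qed.

End Alg.


Lemma fineZ {R : realType} (r : R) (x : \bar R) : fine (r%:E * x)%E = r * fine x.
Proof.
case: x => [y||] /=; rewrite ?mulr0 //.
- by rewrite mulry; case: sgrP => _; rewrite ?mul0e ?mul1e ?mulN1e.
- by rewrite mulrNy; case: sgrP => _; rewrite ?mul0e ?mul1e ?mulN1e.
Qed.

Lemma ratio {R : realType} (a c s A B : R) : s != 0 ->
  (2 * a * s * A) / (2 * c * s * B) = a / c * (A / B).
Proof.
move=> s0.
have -> : (2 * a * s * A) / (2 * c * s * B) =
  (2 * 2^-1) * (s * s^-1) * (a / c * (A / B)) by rewrite !invfM; ring.
by rewrite !mulfV ?mul1r // pnatr_eq0.
Qed.

Section IntZ.
Context {R : realType} d (Om : measurableType d) (P : probability Om R).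

Lemma intZ (k : R) (f : Om -> R) : measurable_fun setT f -> (forall x, 0 <= f x) ->
  (\int[P]_x (k * f x)%:E = k%:E * \int[P]_x (f x)%:E)%E.
Proof.
move=> mf f0.
case: (lerP 0 k) => hk.
  under eq_integral do rewrite EFinM.
  apply: ge0_integralZl_EFin => //; first by move=> x _; rewrite lee_fin.
  exact/measurable_realfun.measurable_EFinP.
have -> : (\int[P]_x (k * f x)%:E = \int[P]_x (- ((- k) * f x)%:E))%E.
  by apply: eq_integral => x _; rewrite mulNr EFinN oppeK.
rewrite integral_ge0N; last by move=> x _; rewrite lee_fin mulr_ge0 // oppr_ge0 ltW.
under eq_integral do rewrite EFinM.
rewrite ge0_integralZl_EFin //; last by rewrite oppr_ge0 ltW.
rewrite EFinN mulNe oppeK //.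
  by move=> x _; rewrite lee_fin.
exact/measurable_realfun.measurable_EFinP.
Qed.
End IntZ.

Theorem theorem4 (R : realType) (d : measure_display) (Om : measurableType d)
  (P : probability Om R) (N T : nat)
  (Z : src N T -> Om -> R)
  (a beta se sm sx tau rho alpha alphat rhot : R)
  (sehat smhat : ('I_N -> 'I_T -> R) -> ('I_N -> 'I_T -> R) -> R)
  (cstar : R) :
  (2 <= N)%N -> (2 <= T)%N ->
  (forall k, measurable_fun setT (Z k)) ->
  (forall k, std_normal_rv P (Z k)) ->
  mutually_independent P Z ->
  0 < se -> 0 < sm -> 0 < sx -> -1 < tau < 1 -> 0 <= rho < 1 ->
  0 < alpha < 1 -> 0 < alphat < 1 -> 0 < rhot < 1 ->
  (forall y x, 0 < sehat y x) -> (forall y x, 0 <= smhat y x) ->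
  measurable_fun setT (fun om => sehat (Yobs Z a beta se sm sx tau rho om)
                                        (Xobs Z sx rho om)) ->
  measurable_fun setT (fun om => smhat (Yobs Z a beta se sm sx tau rho om)
                                        (Xobs Z sx rho om)) ->
  (* c* : the c with P(beta in J_c(sehat)) = c_min *)
  0 < cstar < 1 ->
  fine (P [set om | covers beta
            (Jc cstar (sehat (Yobs Z a beta se sm sx tau rho om) (Xobs Z sx rho om))
                (Yobs Z a beta se sm sx tau rho om) (Xobs Z sx rho om))])
  = inf [set cov | exists tau' psi' rho',
           [/\ -1 < tau' < 1, 0 < psi', 0 <= rho' <= rhot &
            cov = fine (P [set om | covers beta
              (Kint alpha alphat
                 (sehat (Yobs Z a beta se (psi' * se) sx tau' rho' om) (Xobs Z sx rho' om))
                 (smhat (Yobs Z a beta se (psi' * se) sx tau' rho' om) (Xobs Z sx rho' om))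
                 (Yobs Z a beta se (psi' * se) sx tau' rho' om) (Xobs Z sx rho' om))])]] ->
  let Y := Yobs Z a beta se sm sx tau rho in
  let X := Xobs Z sx rho in
  let seh := fun om => sehat (Y om) (X om) in
  let smh := fun om => smhat (Y om) (X om) in
  let Su := fun om => \sum_(i < N) \sum_(t < T) (uZ Z om i t - rowmean (uZ Z om) i) ^+ 2 in
  let Bev := fun om => pretestB alphat (seh om) (smh om) (Y om) (X om) in
  fine ('E_P[fun om => ilength (Kint alpha alphat (seh om) (smh om) (Y om) (X om))])
  / fine ('E_P[fun om => ilength (Jc cstar (seh om) (Y om) (X om))])
  = zq (1 - alpha / 2) / zq ((cstar + 1) / 2) *
    (fine ('E_P[fun om => (seh om / se) * (Num.sqrt (Su om))^-1 *
                  (Num.sqrt (what (seh om) (smh om) (X om)) * (Bev om)%:R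
                   + (~~ Bev om)%:R)])
     / fine ('E_P[fun om => (seh om / se) * (Num.sqrt (Su om))^-1])).
Proof.
move=> N2 T2 hZ hN hI se0 sm0 sx0 /andP[tau1 tau2] /andP[rho0 rho1] al alt rt
  sehp smhp mseh msmh cs _ Y X seh smh Su Bev.
have T0 : (0 < T)%N by apply: leq_trans T2.
have mseh' : measurable_fun setT seh := mseh.
have msmh' : measurable_fun setT smh := msmh.
Ltac mt := first [ exact: mcst | solve [assumption]
  | match goal with H : forall k, measurable_fun _ (?Z k) |- _ => exact: H end
  | apply: mD; [mt|mt] | apply: mM; [mt|mt] | apply: mN; mt | apply: mV; mt
  | apply: mS; mt | apply: mX; mt | apply: msum => ?; mt
  | apply: mbool; apply: mle; [mt|mt] ].
have mSu : measurable_fun setT Su.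
  rewrite /Su /uZ /rowmean; mt.
set zA := zq (1 - alpha / 2); set zC := zq ((cstar + 1) / 2).
pose k2 := sx ^+ 2 * (1 - rho).
have k20 : 0 < k2 by rewrite /k2 mulr_gt0 ?exprn_gt0 // subr_gt0.
pose s := se / Num.sqrt k2.
have s0 : s != 0 by rewrite /s mulf_neq0 ?invr_eq0 ?gt_eqF ?sqrtr_gt0.
pose g := fun om => seh om / se * (Num.sqrt (Su om))^-1.
pose h := fun om => Num.sqrt (what (seh om) (smh om) (X om)) * (Bev om)%:R + (~~ Bev om)%:R.
have Su0 : forall om, 0 <= Su om.
  by move=> om; rewrite /Su sumr_ge0 // => i _; rewrite sumr_ge0 // => t _; exact: sqr_ge0.
have SSWe : forall om, SSW (X om) = k2 * Su om.
  by move=> om; rewrite /X /Xobs SSW_x // ltW.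
have sq : forall om, seh om / Num.sqrt (SSW (X om)) = s * g om.
  move=> om; rewrite SSWe sqrtrM ?ltW // invfM /s /g.
  set iS := (Num.sqrt (Su om))^-1.
  by field; rewrite !gt_eqF // sqrtr_gt0.
have fJ : forall om, ilength (Jc cstar (seh om) (Y om) (X om)) = (2 * zC * s) * g om.
  by move=> om; rewrite /ilength /Jc /= sq; ring.
have fK : forall om, Su om != 0 ->
    ilength (Kint alpha alphat (seh om) (smh om) (Y om) (X om)) = (2 * zA * s) * (g om * h om).
  move=> om hS; rewrite K_len //.
  - by rewrite sq /h /Bev; ring.
  - exact: sehp.
  - by rewrite SSWe mulr_gt0 // lt0r hS Su0.
have mg : measurable_fun setT g by rewrite /g; mt.
have mB : measurable_fun setT Bev.
  rewrite /Bev /pretestB; apply: mle; last exact: mcst.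
  rewrite /Hausman /betaW /betaB /SSW /SSB /rowmean /grandmean /Y /X /Yobs /Xobs
    /ydata /xdata /mudata /uZ /vZ /wZ /eZ; mt.
have mSSW : measurable_fun setT (fun om => SSW (X om)).
  rewrite (_ : (fun om => SSW (X om)) = fun om => k2 * Su om); first by mt.
  by apply/funext => om; rewrite SSWe.
have mSSB : measurable_fun setT (fun om => SSB (X om)).
  rewrite /SSB /rowmean /grandmean /X /Xobs /xdata /uZ /vZ; mt.
have mh : measurable_fun setT h.
  rewrite /h /what /qf /rx; apply: mD; [apply: mM; [|exact: mbool]|].
  - mt.
  - apply: mbool; apply: (measurableT_comp (f := negb)) => //.
have mfK : measurable_fun setT
    (fun om => ilength (Kint alpha alphat (seh om) (smh om) (Y om) (X om))).
  rewrite (_ : (fun om => _) = fun om => 2 * (if Bev om then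
     zA * Num.sqrt (seh om ^+ 2 / (SSW (X om) + SSB (X om) / qf T (smh om / seh om)))
     else zA * (seh om / Num.sqrt (SSW (X om))))); last first.
    by apply/funext => om; rewrite /ilength /Kint /Bev; case: pretestB.
  apply: mM; first exact: mcst.
  apply: mif => //; rewrite /qf; mt.
have g0 : forall om, 0 <= g om.
  move=> om; rewrite /g; apply: mulr_ge0; last by rewrite invr_ge0 sqrtr_ge0.
  by apply: divr_ge0; apply: ltW => //; exact: sehp.
have h0 : forall om, 0 <= h om.
  move=> om; rewrite /h; case: (Bev om) => /=.
  - by apply: addr_ge0; [apply: mulr_ge0; [exact: sqrtr_ge0|exact: ler0n]|exact: ler0n].
  - by apply: addr_ge0; [apply: mulr_ge0; [exact: sqrtr_ge0|exact: ler0n]|exact: ler0n].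
have EJ : ('E_P[fun om => ilength (Jc cstar (seh om) (Y om) (X om))] =
    (2 * zC * s)%:E * 'E_P[g])%E.
  rewrite unlock (eq_integral (fun w => ((2 * zC * s) * g w)%:E)); last first.
    by move=> w _; rewrite fJ.
  exact: intZ.
have N0 : (0 < N)%N by apply: leq_trans N2.
pose i0 : 'I_N := Ordinal N0.
pose t0 : 'I_T := Ordinal T0.
pose t1 : 'I_T := Ordinal T2.
pose a0 : src N T := inl (inl (inl (i0, t0))).
pose b0 : src N T := inl (inl (inl (i0, t1))).
have ab : a0 != b0 by [].
have key : forall om, Su om = 0 -> Z a0 om = Z b0 om.
  move=> om hS.
  have h1 := @psumr_eq0P _ _ _ _ (fun i _ => sumr_ge0 _ (fun t _ => sqr_ge0 _)) hS i0 isT.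
  have h2 : forall t, uZ Z om i0 t = rowmean (uZ Z om) i0.
    move=> t; apply/eqP; rewrite -subr_eq0 -sqrf_eq0; apply/eqP.
    exact: (@psumr_eq0P _ _ _ _ (fun t _ => sqr_ge0 _) h1 t isT).
  by have := h2 t0; have := h2 t1; rewrite /uZ => -> ->.
have nul := @null_eq R d Om P _ Z a0 b0 ab hZ hN hI.
have EK : ('E_P[fun om => ilength (Kint alpha alphat (seh om) (smh om) (Y om) (X om))] =
    (2 * zA * s)%:E * 'E_P[fun om => (g om * h om)%R])%E.
  rewrite unlock.
  have -> : (\int[P]_w (ilength (Kint alpha alphat (seh w) (smh w) (Y w) (X w)))%:E =
      \int[P]_w ((2 * zA * s) * (g w * h w))%:E)%E.
    apply: ae_eq_integral => //.
    - exact/measurable_realfun.measurable_EFinP.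
    - by apply/measurable_realfun.measurable_EFinP; mt.
    - exists [set om | Z a0 om = Z b0 om]; split => //.
        by apply: meas_eq; exact: hZ.
      move=> om /= hom; apply: key; apply: contra_notP hom => hS _.
      by rewrite fK //; apply/eqP.
  apply: intZ; first by mt.
  by move=> om; rewrite mulr_ge0.
by rewrite EK EJ !fineZ ratio.
Qed.
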